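(* Let $f:E\to\mathbb{R}$ be $L$-smooth (not necessarily convex) and attain its minimum at $x_*$, and let $\varepsilon>0$. If Algorithm UAGMsDR with accuracy $\varepsilon$ is run for $N\ge1$ steps, then $$\min_{k=0,\dots,N-1}\|\nabla f(y^k)\|_*^2\le\frac{2L(f(x^0)-f(x_* ))}{N}+L\varepsilon.$$
   Context: $E$ is a finite-dimensional real vector space with a norm $\|\cdot\|$; $E^*$ is its dual, $\langle g,x\rangle$ denotes the value of $g\in E^*$ at $x\in E$, and $\|g\|_*=\max\{\langle g,x\rangle:\|x\|\le 1\}$. For $g\in E^*$, $g^{\#}$ denotes a (fixed) element $s\in E$ with $\|s\|\le 1$ and $\langle g,s\rangle=\|g\|_*$. A prox-function $d:E\to\mathbb{R}$ is continuously differentiable, convex, $1$-strongly convex with respect to $\|\cdot\|$ and satisfies $\min_E d=0$; its Bregman divergence is $V(x,z)=d(x)-d(z)-\langle\nabla d(z),x-z\rangle$. $f$ is $L$-smooth if it is continuously differentiable and $\|\nabla f(x)-\nabla f(y)\|_*\le L\|x-y\|$ for all $x,y\in E$. Algorithm UAGMsDR (input $x^0\in E$, accuracy $\varepsilon>0$): set $A_0=0$, $v^0=x^0$, $\psi_0(x)=V(x,x^0)$. For $k=0,1,2,\dots$: 1. Choose $\beta_k\in\arg\min_{\beta\in[0,1]}f(v^k+\beta(x^k-v^k))$, set $y^k=v^k+\beta_k(x^k-v^k)$. 2. $h_{k+1}\in\arg\min_{h\ge0}f(y^k-h(\nabla f(y^k))^{\#})$, $x^{k+1}=y^k-h_{k+1}(\nabla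 f(y^k))^{\#}$; $a_{k+1}$ is the largest solution of $f(y^k)-\frac{a_{k+1}^2}{2(A_k+a_{k+1})}\|\nabla f(y^k)\|_*^2+\frac{\varepsilon a_{k+1}}{2(A_k+a_{k+1})}=f(x^{k+1})$. 3. $A_{k+1}=A_k+a_{k+1}$; $\psi_{k+1}(x)=\psi_k(x)+a_{k+1}\{f(y^k)+\langle\nabla f(y^k),x-y^k\rangle\}$; $v^{k+1}=\arg\min_{x\in E}\psi_{k+1}(x)$. All minima are assumed attained, and $\nabla f(y^k)\ne0$ for all iterations considered. *)

(* Defs.v *)
From Stdlib Require Import Reals ClassicalEpsilon.
From mathcomp Require Import ssreflect ssrfun ssrbool eqtype ssrnat seq fintype bigop.
Set Implicit Arguments. Unset Strict Implicit.
Local Open Scope R_scope.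

(* The finite-dimensional space E, realised as R^n (coordinates 'I_n). *)
Definition vec (n : nat) := 'I_n -> R.

Definition vadd {n} (x y : vec n) : vec n := fun i => x i + y i.
Definition vsub {n} (x y : vec n) : vec n := fun i => x i - y i.
Definition vscal {n} (c : R) (x : vec n) : vec n := fun i => c * x i.
Definition vzero {n} : vec n := fun _ => 0.

(* Dual space E^* is identified with R^n; <g, x> is the pairing. *)
Definition pair {n} (g x : vec n) : R := \big[Rplus/0]_(i < n) (g i * x i).

Definition is_norm {n} (nrm : vec n -> R) : Prop :=
  (forall x, 0 <= nrm x) /\
  (forall x, nrm x = 0 -> x = vzero) /\
  (forall c x, nrm (vscal c x) = Rabs c * nrm x) /\
  (forall x y, nrm (vadd x y) <= nrm x + nrm y).

Definition is_dual_norm_value {n} (nrm : vec n -> R) (g : vec n) (r : R) : Prop :=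
  (forall x, nrm x <= 1 -> pair g x <= r) /\
  (exists x, nrm x <= 1 /\ pair g x = r).

Definition dual_norm {n} (nrm : vec n -> R) (g : vec n) : R :=
  epsilon (inhabits 0) (is_dual_norm_value nrm g).

Definition is_sharp_map {n} (nrm : vec n -> R) (sharp : vec n -> vec n) : Prop :=
  forall g, nrm (sharp g) <= 1 /\ pair g (sharp g) = dual_norm nrm g /\
            (forall x, nrm x <= 1 -> pair g x <= pair g (sharp g)).

Definition has_gradient {n} (nrm : vec n -> R) (f : vec n -> R) (gf : vec n -> vec n) : Prop :=
  forall x eps, 0 < eps -> exists delta, 0 < delta /\
    forall h, nrm h < delta ->
      Rabs (f (vadd x h) - f x - pair (gf x) h) <= eps * nrm h.

Definition gradient_continuous {n} (nrm : vec n -> R) (gf : vec n -> vec n) : Prop :=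
  forall x eps, 0 < eps -> exists delta, 0 < delta /\
    forall y, nrm (vsub y x) < delta -> dual_norm nrm (vsub (gf y) (gf x)) < eps.

Definition continuously_differentiable {n} (nrm : vec n -> R) (f : vec n -> R)
  (gf : vec n -> vec n) : Prop :=
  has_gradient nrm f gf /\ gradient_continuous nrm gf.

Definition L_smooth {n} (nrm : vec n -> R) (L : R) (f : vec n -> R) (gf : vec n -> vec n) : Prop :=
  continuously_differentiable nrm f gf /\
  (forall x y, dual_norm nrm (vsub (gf x) (gf y)) <= L * nrm (vsub x y)).

Definition convex {n} (d : vec n -> R) : Prop :=
  forall x y lam, 0 <= lam <= 1 ->
    d (vadd (vscal lam x) (vscal (1 - lam) y)) <= lam * d x + (1 - lam) * d y.

Definition strongly_convex1 {n} (nrm : vec n -> R) (d : vec n -> R) : Prop :=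
  forall x y lam, 0 <= lam <= 1 ->
    d (vadd (vscal lam x) (vscal (1 - lam) y))
      <= lam * d x + (1 - lam) * d y - lam * (1 - lam) / 2 * (nrm (vsub x y)) ^ 2.

Definition prox_function {n} (nrm : vec n -> R) (d : vec n -> R) (gd : vec n -> vec n) : Prop :=
  continuously_differentiable nrm d gd /\ convex d /\ strongly_convex1 nrm d /\
  (forall x, 0 <= d x) /\ (exists x, d x = 0).

Definition bregman {n} (d : vec n -> R) (gd : vec n -> vec n) (x z : vec n) : R :=
  d x - d z - pair (gd z) (vsub x z).

Fixpoint psi {n} (d : vec n -> R) (gd : vec n -> vec n) (f : vec n -> R)
  (gf : vec n -> vec n) (x0 : vec n) (y : nat -> vec n) (a : nat -> R)
  (k : nat) (z : vec n) : R :=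
  match k with
  | O => bregman d gd z x0
  | S k' => psi d gd f gf x0 y a k' z
            + a (S k') * (f (y k') + pair (gf (y k')) (vsub z (y k')))
  end.

(* the equation defining a_{k+1} (the denominator A_k + a must be nonzero) *)
Definition a_equation (Ak G fy fx eps aa : R) : Prop :=
  Ak + aa <> 0 /\
  fy - aa ^ 2 / (2 * (Ak + aa)) * G ^ 2 + eps * aa / (2 * (Ak + aa)) = fx.

Definition UAGMsDR_run {n} (nrm : vec n -> R) (f : vec n -> R) (gf : vec n -> vec n)
  (d : vec n -> R) (gd : vec n -> vec n) (sharp : vec n -> vec n) (eps : R)
  (N : nat) (x y v : nat -> vec n) (beta h a A : nat -> R) : Prop :=
  A 0%nat = 0 /\ v 0%nat = x 0%nat /\
  forall k : nat, (k < N)%N ->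
    (0 <= beta k <= 1 /\
     y k = vadd (v k) (vscal (beta k) (vsub (x k) (v k))) /\
     (forall b, 0 <= b <= 1 -> f (y k) <= f (vadd (v k) (vscal b (vsub (x k) (v k)))))) /\
    (0 <= h (S k) /\
     x (S k) = vsub (y k) (vscal (h (S k)) (sharp (gf (y k)))) /\
     (forall t, 0 <= t -> f (x (S k)) <= f (vsub (y k) (vscal t (sharp (gf (y k)))))) /\
     a_equation (A k) (dual_norm nrm (gf (y k))) (f (y k)) (f (x (S k))) eps (a (S k)) /\
     (forall b, a_equation (A k) (dual_norm nrm (gf (y k))) (f (y k)) (f (x (S k))) eps b ->
                b <= a (S k))) /\
    (A (S k) = A k + a (S k) /\
     (forall z, psi d gd f gf (x 0%nat) y a (S k) (v (S k)) <= psi d gd f gf (x 0%nat) y a (S k) z)).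

(* Main.v *)
Require Import Defs.
From Stdlib Require Import Reals ClassicalEpsilon.
From mathcomp Require Import ssreflect ssrfun ssrbool eqtype ssrnat seq fintype bigop.
From Stdlib Require Import Lra Psatz FunctionalExtensionality Classical.
From Coquelicot Require Import Coquelicot.
Local Open Scope R_scope.
Set Implicit Arguments.

Lemma pair_scal n (g u : vec n) c : pair g (vscal c u) = c * pair g u.
Proof.
  rewrite /pair /vscal.
  apply: (big_rec2 (fun a b => a = c * b)); first by ring.
  move=> i y1 y2 _ ->; ring.
Qed.

Lemma pair_sub n (g1 g2 s : vec n) : pair (vsub g1 g2) s = pair g1 s - pair g2 s.
Proof.
  rewrite /pair /vsub.
  apply: (big_rec3 (fun a b c => a = b - c)); first by ring.
  move=> i y1 y2 y3 _ ->; ring.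
Qed.

Lemma nrm_scal_le n (nrm : vec n -> R) c s :
  is_norm nrm -> nrm s <= 1 -> nrm (vscal c s) <= Rabs c.
Proof.
  move=> [H0 [_ [Hs _]]] Hs1. rewrite Hs.
  have := Rabs_pos c. have := H0 s. nra.
Qed.

Lemma pair_abs_le n (nrm : vec n -> R) sharp g s :
  is_norm nrm -> is_sharp_map nrm sharp -> nrm s <= 1 ->
  Rabs (pair g s) <= dual_norm nrm g.
Proof.
  move=> Hn Hsh Hs1. have [Hsg [Heq Hmax]] := Hsh g.
  apply Rabs_le; split.
  - have Hm : nrm (vscal (-1) s) <= 1.
    { case: Hn => [_ [_ [Hsc _]]]. rewrite Hsc Rabs_Ropp Rabs_R1. lra. }
    have := Hmax _ Hm. rewrite pair_scal. lra.
  - have := Hmax _ Hs1. lra.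
Qed.

Lemma dual_nonneg n (nrm : vec n -> R) sharp g :
  is_norm nrm -> is_sharp_map nrm sharp -> 0 <= dual_norm nrm g.
Proof.
  move=> Hn Hsh.
  have H0 : nrm (vscal 0 (@vzero n)) <= 1.
  { case: Hn => [_ [_ [Hsc _]]]. rewrite Hsc Rabs_R0. lra. }
  have := pair_abs_le g _ Hn Hsh H0. have := Rabs_pos (pair g (vscal 0 vzero)). lra.
Qed.

Lemma descent n (nrm : vec n -> R) sharp L f gf y t :
  is_norm nrm -> is_sharp_map nrm sharp -> L_smooth nrm L f gf -> 0 <= L -> 0 <= t ->
  f (vsub y (vscal t (sharp (gf y))))
    <= f y - t * dual_norm nrm (gf y) + L * t * t / 2.
Proof.
  move=> Hn Hsh [[Hgrad _] Hlip] HL Ht.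
  set s := sharp (gf y). set G := dual_norm nrm (gf y).
  have [Hs1 [HsG _]] := Hsh (gf y). rewrite -/s -/G in Hs1 HsG.
  have Hy0 : vsub y (vscal 0 s) = y.
  { apply functional_extensionality => i. rewrite /vsub /vscal. ring. }
  case: (Req_dec t 0) => [-> | Htp].
  { rewrite Hy0. lra. }
  set phi := fun tau => f (vsub y (vscal tau s)).
  set q := fun tau => pair (gf (vsub y (vscal tau s))) s.
  have Hd : forall tau, derivable_pt_lim phi tau (- q tau).
  { move=> tau eps Heps.
    have [del [Hdel Hh]] := Hgrad (vsub y (vscal tau s)) (eps / 2) ltac:(lra).
    exists (mkposreal del Hdel) => h Hh0 Hhd /=.
    have E : vsub y (vscal (tau + h) s) = vadd (vsub y (vscal tau s)) (vscal (- h) s).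
    { apply functional_extensionality => i. rewrite /vsub /vadd /vscal. ring. }
    rewrite /phi E.
    have Hnh := nrm_scal_le (- h) _ Hn Hs1.
    rewrite Rabs_Ropp in Hnh.
    have Hlt : nrm (vscal (- h) s) < del.
    { simpl in Hhd. lra. }
    have := Hh _ Hlt.
    rewrite pair_scal /q.
    set D := f (vadd _ _) - f _. set Q := pair _ s. move=> HD.
    have Hap : 0 < Rabs h by apply Rabs_pos_lt.
    replace (D / h - - Q) with ((D - - h * Q) / h) by (field; auto).
    rewrite Rabs_div //.
    have Hn0 : 0 <= nrm (vscal (- h) s) by case: Hn.
    apply (Rmult_lt_reg_r (Rabs h)) => //.
    unfold Rdiv. rewrite Rmult_assoc Rinv_l; last lra.
    nra. }
  set psi := fun tau => phi tau + (tau * G - L * tau * tau / 2).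
  set psi' := fun tau => - q tau + (G - L * tau).
  have Hpd : forall tau, derivable_pt_lim psi tau (psi' tau).
  { move=> tau. apply derivable_pt_lim_plus; first exact: Hd.
    apply is_derive_Reals. auto_derive; [done | field]. }
  have [c [Hc Hc2]] := MVT_cor2 psi psi' 0 t ltac:(lra) (fun c _ => Hpd c).
  have Hq : q c - G >= - (L * c).
  { rewrite /q -HsG -pair_sub.
    have := pair_abs_le (vsub (gf (vsub y (vscal c s))) (gf y)) _ Hn Hsh Hs1.
    have := Hlip (vsub y (vscal c s)) y.
    have E : vsub (vsub y (vscal c s)) y = vscal (- c) s.
    { apply functional_extensionality => i. rewrite /vsub /vscal. ring. }
    rewrite E. have := nrm_scal_le (- c) _ Hn Hs1. rewrite Rabs_Ropp Rabs_right; last lra.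
    move=> H1 H2 H3.
    have := Rabs_le_between' (pair (vsub (gf (vsub y (vscal c s))) (gf y)) s) 0.
    move: (Rle_abs (- pair (vsub (gf (vsub y (vscal c s))) (gf y)) s)).
    rewrite Rabs_Ropp. nra. }
  have : psi t <= psi 0.
  { have : psi' c <= 0 by rewrite /psi'; lra. nra. }
  rewrite /psi /phi Hy0. lra.
Qed.

Unset Implicit Arguments.

Theorem mainTheorem11 (n : nat) (nrm : vec n -> R) (sharp : vec n -> vec n)
  (L : R) (f : vec n -> R) (gf : vec n -> vec n) (d : vec n -> R) (gd : vec n -> vec n)
  (xstar : vec n) (eps : R) (N : nat)
  (x y v : nat -> vec n) (beta h a A : nat -> R) :
  is_norm nrm ->
  is_sharp_map nrm sharp ->
  L_smooth nrm L f gf ->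
  (forall z, f xstar <= f z) ->
  prox_function nrm d gd ->
  0 < eps ->
  (1 <= N)%N ->
  (forall k : nat, (k < N)%N -> gf (y k) <> vzero) ->
  UAGMsDR_run nrm f gf d gd sharp eps N x y v beta h a A ->
  exists k : nat, (k < N)%N /\
    (dual_norm nrm (gf (y k))) ^ 2
      <= 2 * L * (f (x 0%nat) - f xstar) / INR N + L * eps.
Proof.
  move=> Hn Hsh Hsm Hmin _ Heps HN Hnz [HA0 [Hv0 Hk]].
  have Hdn := fun g => dual_nonneg g Hn Hsh.
  have HL : 0 <= L.
  { set g := gf (y 0%nat).
    have Hg : g <> vzero by apply: Hnz.
    have Hp : 0 < nrm (vsub g vzero).
    { case: Hn => [H0 [Hz _]].
      case: (Rle_lt_or_eq_dec 0 _ (H0 (vsub g vzero))) => // /esym /Hz E.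
      exfalso; apply Hg; apply functional_extensionality => i.
      have := f_equal (fun w => w i) E. rewrite /vsub /vzero /=. lra. }
    case: Hsm => [_ Hlip]. have := Hlip g vzero. have := Hdn (vsub (gf g) (gf vzero)).
    nra. }
  have HNpos : 0 < INR N by apply lt_0_INR; apply/ltP.
  have Hstep : forall k, (k < N)%N -> forall t, 0 <= t ->
      f (x k.+1) <= f (x k) - t * dual_norm nrm (gf (y k)) + L * t * t / 2.
  { move=> k Hkn t Ht.
    have [[Hb [Hy Hymin]] [[Hh0 [Hx [Hxmin _]]] _]] := Hk k Hkn.
    have E1 : vadd (v k) (vscal 1 (vsub (x k) (v k))) = x k.
    { apply functional_extensionality => i. rewrite /vadd /vscal /vsub. ring. }
    have := Hymin 1 ltac:(lra). rewrite E1.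
    have := Hxmin t Ht.
    have := descent (y k) Hn Hsh Hsm HL Ht. lra. }
  case: (Req_dec L 0) => [HL0 | HLne].
  { exists 0%nat; split => //.
    set G := dual_norm nrm (gf (y 0%nat)).
    have HG : G = 0.
    { have := Hdn (gf (y 0%nat)). rewrite -/G => HG0.
      case: (Rle_lt_or_eq_dec 0 G HG0) => // HGp.
      have Ht : 0 <= (f (x 0%nat) - f xstar + 1) / G.
      { apply Rle_div_r => //. have := Hmin (x 0%nat). lra. }
      have := Hstep 0%nat HN _ Ht. rewrite HL0 -/G.
      have := Hmin (x 1%nat).
      have -> : (f (x 0%nat) - f xstar + 1) / G * G = f (x 0%nat) - f xstar + 1 by field; lra.
      lra. }
    rewrite HG HL0. simpl. have -> : 2 * 0 * (f (x 0%nat) - f xstar) / INR N = 0 by field; lra.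
    lra. }
  have HLp : 0 < L by lra.
  apply NNPP => Hno.
  set B := 2 * L * (f (x 0%nat) - f xstar) / INR N + L * eps.
  have Hgt : forall k, (k < N)%N -> B < dual_norm nrm (gf (y k)) ^ 2.
  { move=> k Hkn. apply Rnot_le_lt => Hle. apply Hno. by exists k. }
  have Hind : forall m, (m <= N)%N -> f (x m) <= f (x 0%nat) - INR m * B / (2 * L).
  { elim=> [|m IH] Hm.
    - simpl. have -> : 0 * B / (2 * L) = 0 by field; lra. lra.
    - have Hmn : (m < N)%N := Hm.
      have IH' := IH (ltnW Hm).
      set G := dual_norm nrm (gf (y m)).
      have HG := Hgt m Hmn. rewrite -/G in HG.
      have Ht : 0 <= G / L by apply Rle_div_r => //; rewrite Rmult_0_l; apply Hdn.
      have := Hstep m Hmn _ Ht. rewrite -/G.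
      have -> : f (x m) - G / L * G + L * (G / L) * (G / L) / 2 = f (x m) - G ^ 2 / (2 * L)
        by field; lra.
      rewrite S_INR.
      have : B / (2 * L) < G ^ 2 / (2 * L).
      { apply Rmult_lt_compat_r => //. apply Rinv_0_lt_compat. lra. }
      have -> : (INR m + 1) * B / (2 * L) = INR m * B / (2 * L) + B / (2 * L) by field; lra.
      lra. }
  have := Hind N (leqnn N). have := Hmin (x N).
  have -> : INR N * B / (2 * L) = f (x 0%nat) - f xstar + INR N * eps / 2
    by rewrite /B; field; lra.
  have : 0 < INR N * eps / 2. { apply Rmult_lt_0_compat => //; try lra. nra. }
  lra.
Qed.
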